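(* Let $X$ be a complex Banach space and $\{S_h\}\in C_b((0,1],B(X))$. Let $\lambda,\mu\in r(\{S_h\})$ and suppose there are families $\{\mathcal{R}(\lambda,S_h)\},\{\mathcal{R}(\mu,S_h)\}\in C_b((0,1],B(X))$ satisfying, for $\nu\in\{\lambda,\mu\}$, $\lim_{h\to0}\|(\nu I-S_h)\mathcal{R}(\nu,S_h)-I\|=\lim_{h\to0}\|\mathcal{R}(\nu,S_h)(\nu I-S_h)-I\|=0$, and such that $\lim_{h\to0}\|\mathcal{R}(\lambda,S_h)-\mathcal{R}(\mu,S_h)\|=0$. Then $\lambda=\mu$.
   Context: $B(X)$ is the algebra of bounded linear operators on $X$. $C_b((0,1],B(X))$ denotes the set of families $\{T_h\}_{h\in(0,1]}\subset B(X)$ with $\sup_{h}\|T_h\|<\infty$. The resolvent set of $\{S_h\}$ is $r(\{S_h\})=\{\lambda\in\mathbb{C}:\ \exists\{\mathcal{R}(\lambda,S_h)\}\in C_b((0,1],B(X))$ with $\lim_{h\to0}\|(\lambda I-S_h)\mathcal{R}(\lambda,S_h)-I\|=\lim_{h\to0}\|\mathcal{R}(\lambda,S_h)(\lambda I-S_h)-I\|=0\}$. *)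

(* Defs.v *)
From HB Require Import structures.
From mathcomp Require Import all_boot all_order all_algebra.
From mathcomp Require Import all_classical all_reals all_analysis.
From mathcomp Require Import complex.
Set Implicit Arguments. Unset Strict Implicit. Unset Printing Implicit Defensive.
Import Order.TTheory GRing.Theory Num.Theory.
Import numFieldNormedType.Exports.
Local Open Scope classical_set_scope.
Local Open Scope ring_scope.
Local Open Scope complex_scope.

(* Operator norm of T : X -> X (meaningful for bounded linear T):
   sup { ||T x|| : ||x|| <= 1 }, as a real number. *)
Definition opnorm (R : realType) (X : normedModType R[i]) (T : X -> X) : R :=
  sup [set complex.Re `|T x| | x in [set x : X | `|x| <= 1]].

Definition bounded_linear (R : realType) (X : normedModType R[i]) (T : X -> X) : Prop :=
  linear T /\ exists M : R, forall x : X, complex.Re `|T x| <= M * complex.Re `|x|.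

(* C_b((0,1], B(X)): families {T_h}_{h in (0,1]} in B(X) with sup_h ||T_h|| < oo.
   A family is a function R -> (X -> X); only h in (0,1] matters. *)
Definition Cb (R : realType) (X : normedModType R[i]) (T : R -> X -> X) : Prop :=
  (forall h : R, 0 < h <= 1 -> bounded_linear (T h)) /\
  exists M : R, forall h : R, 0 < h <= 1 -> opnorm (T h) <= M.

Definition opnorm_to0 (R : realType) (X : normedModType R[i]) (A : R -> X -> X) : Prop :=
  (fun h => opnorm (A h)) @ 0^'+ --> (0 : R).

Definition is_resolvent_family (R : realType) (X : normedModType R[i])
  (S : R -> X -> X) (l : R[i]) (Rl : R -> X -> X) : Prop :=
  Cb Rl /\
  opnorm_to0 (fun h x => (l *: Rl h x - S h (Rl h x)) - x) /\
  opnorm_to0 (fun h x => Rl h (l *: x - S h x) - x).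

Definition resolvent_set (R : realType) (X : normedModType R[i])
  (S : R -> X -> X) : set R[i] :=
  [set l | exists Rl : R -> X -> X, is_resolvent_family S l Rl].

(* Main.v *)
Require Import Defs.
From HB Require Import structures.
From mathcomp Require Import all_boot all_order all_algebra.
From mathcomp Require Import all_classical all_reals all_analysis.
From mathcomp Require Import complex.
From mathcomp Require Import ring lra.
Import Order.TTheory GRing.Theory Num.Theory.
Import numFieldNormedType.Exports.
Local Open Scope classical_set_scope.
Local Open Scope ring_scope.
Local Open Scope complex_scope.
Set Implicit Arguments. Unset Strict Implicit.

Section N.
Variables (R : realType) (X : normedModType R[i]).
Definition N (x : X) : R := complex.Re `|x|.

Lemma normE (x : X) : `|x| = (N x)%:C.
Proof. by rewrite /N RRe_real // normr_real. Qed.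

Lemma N_ge0 (x : X) : 0 <= N x.
Proof. by rewrite -ler0c -normE. Qed.

Lemma ND (x y : X) : N (x + y) <= N x + N y.
Proof. by rewrite -lecR rmorphD /= -!normE ler_normD. Qed.

Lemma NN (x : X) : N (- x) = N x.
Proof. by rewrite /N normrN. Qed.

Lemma NB (x y : X) : N (x - y) <= N x + N y.
Proof. by rewrite -(NN y) ND. Qed.

Lemma NZ (a : R[i]) (x : X) : N (a *: x) = complex.Re `|a| * N x.
Proof.
apply: complexI; rewrite rmorphM /= -normE normrZ; congr (_ * _).
by rewrite RRe_real // normr_real.
Qed.

Lemma Nr (r : R) : 0 <= r -> complex.Re `|r%:C| = r.
Proof. by move=> r0; rewrite ger0_norm ?ler0c. Qed.

Lemma N0 (x : X) : N x = 0 -> x = 0.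
Proof. by move=> h; apply/normr0_eq0; rewrite normE h. Qed.

Lemma Nzero : N (0 : X) = 0.
Proof. by rewrite /N normr0. Qed.
End N.

Section Op.
Variables (R : realType) (X : normedModType R[i]).
Implicit Types (T : X -> X).

Lemma lin0 T : linear T -> T 0 = 0.
Proof.
move=> h; have := h 1 0 0; rewrite scale1r addr0 scale1r => e.
by apply: (addIr (T 0)); rewrite add0r -e.
Qed.

Lemma linZ T : linear T -> forall a x, T (a *: x) = a *: T x.
Proof. by move=> h a x; have := h a x 0; rewrite !addr0 (lin0 h) addr0. Qed.

Lemma linB T : linear T -> forall x y, T (x - y) = T x - T y.
Proof.
move=> h x y; have := h (-1) y x; rewrite !scaleN1r => e.
by rewrite addrC e addrC.
Qed.

Lemma ball_le (x : X) : (`|x| <= 1) = (N x <= 1).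
Proof. by rewrite normE -lecR rmorph1. Qed.

Lemma op_ub T M : (forall x, N x <= 1 -> N (T x) <= M) ->
  forall x, N x <= 1 -> N (T x) <= opnorm T.
Proof.
move=> hM x hx; apply: ub_le_sup.
  by exists M => _ [y hy <-]; apply: hM; rewrite -ball_le.
by exists x => //; rewrite /= ball_le.
Qed.

Lemma bl_ub T : bounded_linear T -> forall x, N x <= 1 -> N (T x) <= opnorm T.
Proof.
move=> [_ [M hM]]; apply: (@op_ub _ `|M|) => x hx.
apply: (le_trans (hM x)); apply: (le_trans (ler_norm _)).
rewrite normrM (ger0_norm (N_ge0 x)).
by rewrite -[leRHS]mulr1 ler_wpM2l.
Qed.

Lemma homog T : bounded_linear T -> forall x, N (T x) <= opnorm T * N x.
Proof.
move=> hT x; have [lT _] := hT.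
have [x0|xn0] := eqVneq x 0.
  by rewrite x0 lin0 // !Nzero mulr0.
have np : 0 < N x.
  rewrite lt_def N_ge0 andbT; apply/eqP => /N0 /eqP; exact/negP.
have := @bl_ub _ hT ((N x)^-1%:C *: x).
rewrite linZ // !NZ Nr ?invr_ge0 ?(ltW np) // mulVf ?gt_eqF // lexx => /(_ isT).
by rewrite ler_pdivrMl // mulrC.
Qed.
End Op.

Lemma idz (V : zmodType) (lA lB mB SA SB u : V) :
  lB - mB = ((lA - SA) - u) - ((mB - SB) - u) - (lA - lB) + (SA - SB).
Proof.
rewrite !opprB !addrA.
rewrite (addrAC _ SA (-SB)) (addrAC _ (-lA) (-SB)) (addrAC _ lB (-SB)) (addrAC _ (-mB) (-SB)) addrK.
rewrite (addrAC _ (-lA) SA) (addrAC _ lB SA) (addrAC _ (-mB) SA) subrK.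
rewrite (addrAC _ lB (-lA)) (addrAC _ (-mB) (-lA)) subrK subrr add0r addrC.
by [].
Qed.
Lemma arith (R : realFieldType) (c K L p q d a e MS : R) :
  0 < c -> 0 <= K -> 0 <= L -> 0 <= MS -> 0 <= d -> 0 <= a ->
  e = c / (2 * (1 + c + K * (2 + L + MS))) ->
  p < e -> q < e -> d < e ->
  1 <= K * a + q -> c * a <= p + q + L * d + MS * d -> False.
Proof.
move=> c0 K0 L0 M0 d0 a0 ee pe qe de h1 h2.
set W := 2 + L + MS.
have W0 : 0 < W by rewrite /W; lra.
have D0 : 0 < 2 * (1 + c + K * W) by nra.
have e0 : 0 < e by rewrite ee divr_gt0.
have hE : e * (2 * (1 + c + K * W)) = c by rewrite ee mulfVK // gt_eqF.
have h3 : c * a <= e * W by rewrite /W; nra.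
have h4 : c * (1 - e) <= K * (e * W) by nra.
nra.
Qed.

Section Bounds.
Variables (R : realType) (X : normedModType R[i]).
Implicit Types (T : X -> X).

Lemma opnorm_ge0 T : bounded_linear T -> 0 <= opnorm T.
Proof.
move=> hT; have := @bl_ub _ _ _ hT 0; rewrite (lin0 hT.1) Nzero; apply; exact: ler01.
Qed.

Lemma E1_ub (S Rl : X -> X) (l : R[i]) : bounded_linear S -> bounded_linear Rl ->
  forall x, N x <= 1 ->
  N ((l *: Rl x - S (Rl x)) - x) <=
    complex.Re `|l| * opnorm Rl + opnorm S * opnorm Rl + 1.
Proof.
move=> hS hR x hx.
have h1 := NB (l *: Rl x - S (Rl x)) x.
have h2 := NB (l *: Rl x) (S (Rl x)); rewrite NZ in h2.
have h3 := homog hR x; have h4 := homog hS (Rl x).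
have g1 := opnorm_ge0 hS; have g2 := opnorm_ge0 hR.
have g3 : 0 <= complex.Re `|l| by have := N_ge0 (l : R[i]^o).
have g4 := N_ge0 x; have g5 := N_ge0 (Rl x).
have k1 : N (Rl x) <= opnorm Rl by apply: (le_trans h3); rewrite ler_piMr.
have k2 : N (S (Rl x)) <= opnorm S * opnorm Rl.
  by apply: (le_trans h4); rewrite ler_wpM2l.
have k3 : complex.Re `|l| * N (Rl x) <= complex.Re `|l| * opnorm Rl.
  by rewrite ler_wpM2l.
lra.
Qed.

Lemma D_ub (A B : X -> X) : bounded_linear A -> bounded_linear B ->
  forall x, N x <= 1 -> N (A x - B x) <= opnorm A + opnorm B.
Proof.
move=> hA hB x hx; have h1 := NB (A x) (B x).
have h3 := homog hA x; have h4 := homog hB x.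
have g1 := opnorm_ge0 hA; have g2 := opnorm_ge0 hB; have g4 := N_ge0 x.
nra.
Qed.
End Bounds.

Theorem proposition19 (R : realType) (X : completeNormedModType R[i])
  (Xnontriv : exists x : X, x != 0)
  (S : R -> X -> X) (HS : Cb S) (l m : R[i])
  (hl : l \in resolvent_set S) (hm : m \in resolvent_set S)
  (Rl Rm : R -> X -> X)
  (HRl : is_resolvent_family S l Rl) (HRm : is_resolvent_family S m Rm)
  (Hdiff : opnorm_to0 (fun h x => Rl h x - Rm h x)) :
  l = m.
Proof.
apply/eqP; apply/negPn/negP => nlm.
case: HS => [HSbl [MS hMS]].
case: HRl => [[Rlbl _] [Hl1 _]]; case: HRm => [[Rmbl _] [Hm1 _]].
case: Xnontriv => x0 x0n0.
have nx0 : 0 < N x0.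
  rewrite lt_def N_ge0 andbT; apply/eqP => /N0 /eqP; exact/negP.
set u := (N x0)^-1%:C *: x0.
have Nu : N u = 1 by rewrite /u NZ Nr ?invr_ge0 ?(ltW nx0) // mulVf ?gt_eqF.
set c := N (l - m : R[i]^o).
have c0 : 0 < c.
  rewrite lt_def N_ge0 andbT; apply/eqP => /N0 /eqP; rewrite subr_eq0; exact/negP.
set L := N (l : R[i]^o).
set K := N (m : R[i]^o) + `|MS|.
have K0 : 0 <= K by rewrite /K addr_ge0 // N_ge0.
have L0 : 0 <= L by exact: N_ge0.
set e := c / (2 * (1 + c + K * (2 + L + `|MS|))).
have e0 : 0 < e.
  rewrite /e divr_gt0 // mulr_gt0 // ltr_wpDr //; last by rewrite addr_gt0.
  by rewrite mulr_ge0 // !addr_ge0.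
have [h [h0 [h1 [p1 [q1 d1]]]]] := (filter_ex (filterI (nbhs_right_gt (0:R)) (filterI (nbhs_right_le (@ltr01 R))
  (filterI (cvgr0_norm_lt _ Hl1 _ e0) (filterI (cvgr0_norm_lt _ Hm1 _ e0)
    (cvgr0_norm_lt _ Hdiff _ e0)))))).
have h01 : 0 < h <= 1 by rewrite h0 h1.
have bS := HSbl h h01; have bRl := Rlbl h h01; have bRm := Rmbl h h01.
have oS0 := opnorm_ge0 bS; have oSM : opnorm (S h) <= `|MS|.
  exact: (le_trans (hMS h h01) (ler_norm _)).
set p := N ((l *: Rl h u - S h (Rl h u)) - u).
set q := N ((m *: Rm h u - S h (Rm h u)) - u).
set d := N (Rl h u - Rm h u).
set a := N (Rm h u).
have pe : p < e.
  apply: (le_lt_trans _ (le_lt_trans (ler_norm _) p1)).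
  apply: (@op_ub _ _ (fun x => (l *: Rl h x - S h (Rl h x)) - x) _ (E1_ub l bS bRl)).
  by rewrite Nu.
have qe : q < e.
  apply: (le_lt_trans _ (le_lt_trans (ler_norm _) q1)).
  apply: (@op_ub _ _ (fun x => (m *: Rm h x - S h (Rm h x)) - x) _ (E1_ub m bS bRm)).
  by rewrite Nu.
have de : d < e.
  apply: (le_lt_trans _ (le_lt_trans (ler_norm _) d1)).
  apply: (@op_ub _ _ (fun x => Rl h x - Rm h x) _ (D_ub bRl bRm)).
  by rewrite Nu.
have a0 : 0 <= a := N_ge0 _.
have d0 : 0 <= d := N_ge0 _.
have SB y : N (S h y) <= `|MS| * N y.
  apply: (le_trans (homog bS y)); rewrite ler_wpM2r //; exact: N_ge0.
have ineq1 : 1 <= K * a + q.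
  have e1 : u = (m *: Rm h u - S h (Rm h u)) - ((m *: Rm h u - S h (Rm h u)) - u).
    by rewrite opprB addrC subrK.
  have k1 := NB (m *: Rm h u - S h (Rm h u)) ((m *: Rm h u - S h (Rm h u)) - u).
  rewrite -e1 Nu -/q in k1.
  have k2 := NB (m *: Rm h u) (S h (Rm h u)); rewrite NZ -/a in k2.
  have k3 := SB (Rm h u); rewrite -/a in k3.
  rewrite /K; lra.
have ineq2 : c * a <= p + q + L * d + `|MS| * d.
  have e2 := idz (l *: Rl h u) (l *: Rm h u) (m *: Rm h u) (S h (Rl h u)) (S h (Rm h u)) u.
  rewrite -scalerBl -scalerBr -(linB bS.1) in e2.
  have k1 := NZ (l - m) (Rm h u); rewrite e2 -/a in k1.
  have k2 := ND ((l *: Rl h u - S h (Rl h u) - u) - (m *: Rm h u - S h (Rm h u) - u)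
     - l *: (Rl h u - Rm h u)) (S h (Rl h u - Rm h u)).
  have k3 := NB ((l *: Rl h u - S h (Rl h u) - u) - (m *: Rm h u - S h (Rm h u) - u))
     (l *: (Rl h u - Rm h u)).
  have k4 := NB (l *: Rl h u - S h (Rl h u) - u) (m *: Rm h u - S h (Rm h u) - u).
  have k5 := SB (Rl h u - Rm h u).
  rewrite NZ -/d -/p -/q in k3 k4 k5.
  rewrite -/p -/q in k4.
  rewrite /c /L; lra.
exact: (arith c0 K0 L0 (normr_ge0 MS) d0 a0 erefl pe qe de ineq1 ineq2).
Qed.
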